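(* Let $\mathcal{X}$ be a finite set, $T>0$, $\alpha>0$, $r:\mathcal{X}\to\mathbb{R}$ a reward function, and $Q^{\mathrm{pre}}(t)$, $t\in[0,T]$, a pretrained time-dependent CTMC generator on $\mathcal{X}$. Consider all CTMCs $(x_t)_{t\in[0,T]}$ started from the fixed initial distribution $p_{\lim}$ (a Dirac mass at a single state) and driven by a generator $Q(t)$, and let $Q^{\star}$ maximize, over all such generators (the fully nonparametric/realizable class), the objective $$J(Q)=\mathbb{E}_{x_{0:T}\sim P^{Q}}\big[r(x_T)\big]-\alpha\,\mathbb{E}_{x_{0:T}\sim P^{Q}}\Big[\int_0^T\sum_{y\neq x_t}\Big\{Q^{\mathrm{pre}}_{x_t,y}(t)-Q_{x_t,y}(t)+Q_{x_t,y}(t)\log\frac{Q_{x_t,y}(t)}{Q^{\mathrm{pre}}_{x_t,y}(t)}\Big\}dt\Big].$$ Then the distribution at time $T$ of the CTMC with generator $Q^{\star}$ started from $p_{\lim}$ is proportional to $\exp(r(x)/\alpha)\,p^{\mathrm{pre}}(x)$, where $p^{\mathrm{pre}}$ is the time-$T$ distribution of the CTMC with generator $Q^{\mathrm{pre}}$ started from $p_{\lim}$.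
   Context: A (time-dependent) CTMC generator on a finite set $\mathcal{X}$ is a family of matrices $Q(t)=(Q_{x,y}(t))_{x,y\in\mathcal{X}}$ with $Q_{x,y}(t)\ge 0$ for $x\neq y$ (the transition rate from $x$ to $y$) and $Q_{x,x}(t)=-\sum_{y\neq x}Q_{x,y}(t)$; the marginals $p_t$ satisfy the Kolmogorov forward equation $\frac{d p_t(x)}{dt}=\sum_{y\neq x}Q_{y,x}(t)p_t(y)-\sum_{y\neq x}Q_{x,y}(t)p_t(x)$, i.e. $P(x_{t+dt}=y\mid x_t=x)=\mathbb{1}(x=y)+Q_{x,y}(t)\,dt$. $P^{Q}$ denotes the path law of the CTMC with generator $Q$ on $[0,T]$ started at $p_{\lim}$. The convention $0\log(0/0)=0$ is used, and generators are assumed regular enough (e.g. continuous in $t$) that the forward/backward Kolmogorov equations have unique solutions. The second term of $J$ is the KL divergence between the path measures $P^{Q}$ and $P^{Q^{\mathrm{pre}}}$. *)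

(* Defs.v *)
From HB Require Import structures.
From mathcomp Require Import all_boot all_order all_algebra.
From mathcomp Require Import all_classical all_reals all_analysis.
Set Implicit Arguments. Unset Strict Implicit. Unset Printing Implicit Defensive.
Import Order.TTheory GRing.Theory Num.Theory.
Import numFieldNormedType.Exports.
Local Open Scope classical_set_scope.
Local Open Scope ring_scope.

Section CTMC.
Context {R : realType} {X : finType}.

(* A time-dependent rate matrix: Q t x y = Q_{x,y}(t). *)

Definition is_generator (T : R) (Q : R -> X -> X -> R) : Prop :=
  [/\ (forall t x y, x != y -> 0 <= t <= T -> 0 <= Q t x y),
      (forall t x, 0 <= t <= T -> Q t x x = - \sum_(y | y != x) Q t x y) &
      (forall x y, {within `[0, T], continuous (fun t => Q t x y)})].

(* p is the (unique) solution on [0,T] of the Kolmogorov forward equation for Q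
   started at the Dirac mass at x0: p t x = P(x_t = x). *)
Definition kolmogorov_forward (T : R) (Q : R -> X -> X -> R) (x0 : X)
    (p : R -> X -> R) : Prop :=
  [/\ (forall x, p 0 x = (x == x0)%:R),
      (forall x, {within `[0, T], continuous (fun t => p t x)}) &
      (forall x t, 0 < t < T ->
         is_derive t 1 (fun s => p s x)
           (\sum_(y | y != x) Q t y x * p t y - \sum_(y | y != x) Q t x y * p t x))].

(* Pointwise KL rate  b - a + a log(a/b)  (a = Q, b = Q^pre), with the
   conventions 0 log(0/b) = 0 and a log(a/0) = +oo for a > 0. *)
Definition kl_rate (a b : R) : \bar R :=
  if a == 0 then b%:E
  else if b == 0 then +oo%E
  else (b - a + a * ln (a / b))%:E.

Definition running_cost (Qpre Q : R -> X -> X -> R) (p : R -> X -> R) (t : R)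
    : \bar R :=
  (\sum_(x : X) (p t x)%:E *
      \sum_(y | y != x) kl_rate (Q t x y) (Qpre t x y))%E.

(* J(Q) = E[r(x_T)] - alpha * KL(P^Q || P^Qpre), written via the marginals p. *)
Definition objective (T alpha : R) (r : X -> R) (Qpre Q : R -> X -> X -> R)
    (p : R -> X -> R) : \bar R :=
  ((\sum_(x : X) p T x * r x)%:E -
   alpha%:E * \int[@lebesgue_measure R]_(t in `[0%R, T]%classic) running_cost Qpre Q p t)%E.

End CTMC.

(* Main.v *)
Require Import Defs.
From HB Require Import structures.
From mathcomp Require Import all_boot all_order all_algebra.
From mathcomp Require Import all_classical all_reals all_analysis.
From mathcomp Require Import ring lra measurable_realfun.
Unset Printing Implicit Defensive.
Import Order.TTheory GRing.Theory Num.Theory.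
Import numFieldNormedType.Exports.
Local Open Scope classical_set_scope.
Local Open Scope ring_scope.

Section Tools.
Context {R : realType}.
Implicit Types (A : set R) (f g : R -> R).

Lemma wcM A f g : {within A, continuous f} -> {within A, continuous g} ->
  {within A, continuous (fun t => f t * g t)}.
Proof. by move=> cf cg x; apply: cvgM; [exact: cf|exact: cg]. Qed.

Lemma wcN A f : {within A, continuous f} -> {within A, continuous (fun t => - f t)}.
Proof. by move=> cf x; apply: cvgN; exact: cf. Qed.

Lemma wcD A f g : {within A, continuous f} -> {within A, continuous g} ->
  {within A, continuous (fun t => f t + g t)}.
Proof. by move=> cf cg x; apply: cvgD; [exact: cf|exact: cg]. Qed.

Lemma wcB A f g : {within A, continuous f} -> {within A, continuous g} ->
  {within A, continuous (fun t => f t - g t)}.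
Proof. by move=> cf cg x; apply: cvgB; [exact: cf|exact: cg]. Qed.

Lemma wcC A (c : R) : {within A, continuous (fun _ : R => c)}.
Proof. by apply: continuous_subspaceT => x; exact: cvg_cst. Qed.

Lemma wcId A : {within A, continuous (fun t : R => t)}.
Proof. by apply: continuous_subspaceT => x. Qed.

Lemma wc_sum (I : finType) (P : pred I) A (F : I -> R -> R) :
  (forall i, {within A, continuous (F i)}) ->
  {within A, continuous (fun t => \sum_(i | P i) F i t)}.
Proof.
move=> cF.
have -> : (fun t => \sum_(i | P i) F i t) = (\sum_(i | P i) F i).
  by apply/funext => t; rewrite fct_sumE.
elim/big_rec: _ => [|i G _ cG]; first exact: wcC.
exact: wcD.
Qed.

Lemma wcV A f : (forall t, A t -> f t != 0) -> {within A, continuous f} ->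
  {within A, continuous (fun t => (f t)^-1)}.
Proof.
move=> f0 cf; rewrite continuous_subspace_in => x /[!inE] Ax.
apply: continuousV; first exact: f0.
by rewrite continuous_subspace_in in cf; apply: cf; rewrite inE.
Qed.

Lemma wc_comp A f (g : R -> R) : {within A, continuous f} ->
  (forall t, A t -> {for f t, continuous g}) ->
  {within A, continuous (fun t => g (f t))}.
Proof.
move=> cf cg; rewrite continuous_subspace_in => x /[!inE] Ax.
apply: (@continuous_comp (subspace A) _ _ f g).
  by rewrite continuous_subspace_in in cf; apply: cf; rewrite inE.
exact: cg.
Qed.

End Tools.

Section D.
Context {R : realType}.
Notation mu := (@lebesgue_measure R).

Lemma is_derive_ext {f g : R -> R} {x df dg : R} :
  is_derive x 1 f df -> f = g -> df = dg -> is_derive x 1 g dg.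
Proof. by move=> H fg dfg; rewrite -fg -dfg. Qed.

Lemma is_derive_comp1 {f g : R -> R} {x df dg : R} :
  is_derive x 1 f df -> is_derive (f x) 1 g dg ->
  is_derive x 1 (fun t => g (f t)) (dg * df).
Proof.
move=> hf hg.
have df_ : derivable f x 1 by exact: ex_derive.
have dg_ : derivable g (f x) 1 by exact: ex_derive.
have dc : derivable (g \o f) x 1.
  apply/derivable1_diffP; apply: differentiable_comp.
    by apply/derivable1_diffP.
  by apply/derivable1_diffP.
apply: DeriveDef => //.
rewrite -derive1E (derive1_comp df_ dg_) !derive1E.
by rewrite (@derive_val _ _ _ _ _ _ _ hf) (@derive_val _ _ _ _ _ _ _ hg).
Qed.

Lemma is_derive_fsum {I : finType} {P : pred I} {F : I -> R -> R} {dF : I -> R} {x : R} :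
  (forall i, P i -> is_derive x 1 (F i) (dF i)) ->
  is_derive x 1 (fun t => \sum_(i | P i) F i t) (\sum_(i | P i) dF i).
Proof.
move=> hF.
have -> : (fun t => \sum_(i | P i) F i t) = (\sum_(i | P i) F i).
  by apply/funext => t; rewrite fct_sumE.
elim/big_rec2: _ => [|i y G Pi hG]; first exact: is_derive_cst.
exact: is_deriveD (hF _ Pi) hG.
Qed.

Lemma is_deriveM' {f g : R -> R} {x df dg : R} :
  is_derive x 1 f df -> is_derive x 1 g dg ->
  is_derive x 1 (fun t => f t * g t) (df * g x + f x * dg).
Proof.
move=> hf hg; apply: (is_derive_ext (is_deriveM hf hg)).
  by apply/funext.
rewrite /GRing.scale /=; by rewrite addrC mulrC.
Qed.

Lemma is_deriveB' {f g : R -> R} {x df dg : R} :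
  is_derive x 1 f df -> is_derive x 1 g dg ->
  is_derive x 1 (fun t => f t - g t) (df - dg).
Proof. by move=> hf hg; exact: is_deriveB. Qed.

Lemma is_deriveD' {f g : R -> R} {x df dg : R} :
  is_derive x 1 f df -> is_derive x 1 g dg ->
  is_derive x 1 (fun t => f t + g t) (df + dg).
Proof. by move=> hf hg; exact: is_deriveD. Qed.

Lemma is_derive_cst' (a x : R) : is_derive x 1 (fun _ : R => a) 0.
Proof. exact: is_derive_cst. Qed.

Lemma is_derive_id' (x : R) : is_derive x 1 (fun t : R => t) 1.
Proof. exact: is_derive_id. Qed.


Lemma itv_sub (a b c d : R) : a <= c -> d <= b -> `[c, d] `<=` `[a, b].
Proof.
move=> ac db u /=; rewrite !in_itv /= => /andP[cu ud].
by rewrite (le_trans ac cu) (le_trans ud db).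
Qed.

Lemma deriv_sign (g dg : R -> R) (a b : R) :
  {within `[a, b], continuous g} ->
  (forall t, a < t < b -> is_derive t 1 g (dg t)) ->
  (forall t, a < t < b -> dg t <= 0) -> 0 <= g b ->
  forall t, a <= t <= b -> 0 <= g t.
Proof.
move=> cg dgh dg0 gb t /andP[at0 tb].
have [tb'|] := ltP t b; last first.
  by move=> bt; have -> : t = b by apply/eqP; rewrite eq_le tb bt.
have cg' : {within `[t, b], continuous g}.
  by apply: continuous_subspaceW cg; exact: itv_sub.
have hd : forall x, x \in `]t, b[ -> is_derive x 1 g (dg x).
  move=> x; rewrite in_itv /= => /andP[tx xb]; apply: dgh.
  by rewrite xb (le_lt_trans at0 tx).
have [c /[!in_itv] /= /andP[tc cb] eq] := MVT tb' hd cg'.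
have : dg c * (b - t) <= 0.
  apply: mulr_le0_ge0; last by rewrite subr_ge0 ltW.
  by apply: dg0; rewrite cb (le_lt_trans at0 tc).
by rewrite -eq subr_le0 => gbt; exact: le_trans gb gbt.
Qed.

Definition Ri (t : R) (f : R -> R) : R := (\int[mu]_(u in `[0, t]) f u)%R.

Arguments Ri : simpl never.

Lemma intg_cont (S : R) f : 0 < S -> {within `[0, S], continuous f} ->
  mu.-integrable `[0, S] (EFin \o f).
Proof. by move=> S0 cf; apply: continuous_compact_integrable => //; exact: segment_compact. Qed.

Lemma Ri_cont (S : R) f : 0 <= S -> mu.-integrable `[0, S] (EFin \o f) ->
  {within `[0, S], continuous (fun t => Ri t f)}.
Proof. by move=> S0 If; exact: (parameterized_integral_continuous S0 If). Qed.

Lemma Ri_der (S t : R) f : 0 < t < S -> {within `[0, S], continuous f} ->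
  is_derive t 1 (fun u => Ri u f) (f t).
Proof.
move=> /andP[t0 tS] cf.
have If : mu.-integrable `[0, S] (EFin \o f) by apply: intg_cont (lt_trans t0 tS) cf.
have cft : {for t, continuous f}.
  by apply: (within_continuous_continuous (lt_trans t0 tS) cf); rewrite in_itv /= t0 tS.
have [d1 d2] := continuous_FTC1_closed tS If t0 cft.
apply: DeriveDef => //.
by rewrite -derive1E.
Qed.

Lemma intop_cont (S : R) f : 0 < S -> {within `[0, S], continuous f} ->
  {within `[0, S], continuous (fun t => Ri S f - Ri t f)}.
Proof.
move=> S0 cf; apply: wcB; first exact: wcC.
by apply: Ri_cont; [exact: ltW|exact: intg_cont].
Qed.

Lemma intop_der (S t : R) f : 0 < t < S -> {within `[0, S], continuous f} ->
  is_derive t 1 (fun u => Ri S f - Ri u f) (- f t).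
Proof.
move=> tS cf; apply: (is_derive_ext (is_deriveB' (is_derive_cst' (Ri S f) t) (Ri_der _ _ _ tS cf))) => //.
by rewrite sub0r.
Qed.

End D.


Section Ex.
Context {R : realType} {X : finType}.
Notation mu := (@lebesgue_measure R).
Variables (S N : R) (B : R -> X -> X -> R) (c : X -> R).
Hypotheses (S0 : 0 < S) (N0 : 0 <= N)
  (Bc : forall x y, {within `[0, S], continuous (fun t => B t x y)})
  (B0 : forall t x y, 0 <= t <= S -> 0 <= B t x y)
  (BN : forall t x y, 0 <= t <= S -> B t x y <= N)
  (c0 : forall x, 0 <= c x).

Definition Fop (k : R -> X -> R) (x : X) (u : R) : R := \sum_y B u x y * k u y.

Fixpoint kit (n : nat) : R -> X -> R :=
  if n is n'.+1 then fun t x => c x + (Ri S (Fop (kit n') x) - Ri t (Fop (kit n') x))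
  else fun _ x => c x.

Arguments Fop : simpl never.

Definition Cc := \sum_x c x.
Definition Lc := #|X|%:R * N.
Definition W (t : R) := Cc * expR (Lc * (S - t)).

Arguments W : simpl never.

Lemma Fop_cont k x : (forall y, {within `[0, S], continuous (fun t => k t y)}) ->
  {within `[0, S], continuous (Fop k x)}.
Proof. by move=> ck; apply: wc_sum => y; apply: wcM. Qed.

Lemma kit_cont n x : {within `[0, S], continuous (fun t => kit n t x)}.
Proof.
elim: n x => [|n IH] x /=; first exact: wcC.
apply: wcD; first exact: wcC.
by apply: intop_cont => //; apply: Fop_cont.
Qed.

Lemma kit_der n x (t : R) : 0 < t < S ->
  is_derive t 1 (fun u => kit n.+1 u x) (- Fop (kit n) x t).
Proof.
move=> tS.
apply: (is_derive_ext (is_deriveD' (is_derive_cst' (c x) t) (intop_der _ _ _ tS (Fop_cont (kit n) x (kit_cont n))))) => //.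
by rewrite add0r.
Qed.

Lemma kitS_S n x : kit n.+1 S x = c x.
Proof. by rewrite /= subrr addr0. Qed.

Lemma Cc_ge x : c x <= Cc.
Proof.
rewrite /Cc (bigD1 x) //= lerDl; apply: sumr_ge0 => y _; exact: c0.
Qed.

Lemma Lc0 : 0 <= Lc.
Proof. by rewrite /Lc mulr_ge0. Qed.

Lemma W_ge (t : R) : t <= S -> Cc <= W t.
Proof.
move=> tS; rewrite /W -{1}(mulr1 Cc) ler_wpM2l //.
  by rewrite /Cc sumr_ge0.
apply: le_trans (expR_ge1Dx _); rewrite lerDl; apply: mulr_ge0; [exact: Lc0|by rewrite subr_ge0].
Qed.

Lemma W_cont : {within `[0, S], continuous W}.
Proof.
apply: wcM; first exact: wcC.
apply: (wc_comp _ (fun t => Lc * (S - t))).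
  apply: wcM; first exact: wcC.
  by apply: wcB; [exact: wcC|exact: wcId].
move=> t _; exact: continuous_expR.
Qed.

Lemma W_der (t : R) : is_derive t 1 W (- Lc * W t).
Proof.
have h1 : is_derive t 1 (fun u => Lc * (S - u)) (Lc * (0 - 1)).
  apply: (is_derive_ext (is_deriveM' (is_derive_cst' Lc t) (is_deriveB' (is_derive_cst' S t) (is_derive_id' t)))) => //.
  by rewrite mul0r add0r.
have h2 := is_derive_comp1 h1 (is_derive_expR _).
apply: (is_derive_ext (is_deriveM' (is_derive_cst' Cc t) h2)) => //.
rewrite /W; ring.
Qed.

Lemma Fop_ge0 k x (u : R) : 0 <= u <= S -> (forall y, 0 <= k u y) -> 0 <= Fop k x u.
Proof. by move=> uS k0; apply: sumr_ge0 => y _; apply: mulr_ge0; [exact: B0|exact: k0]. Qed.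

Lemma Fop_le k x (u w : R) : 0 <= u <= S -> (forall y, 0 <= k u y <= w) ->
  Fop k x u <= Lc * w.
Proof.
move=> uS kw; rewrite /Fop.
apply: (@le_trans _ _ (\sum_(y : X) N * w)).
  apply: ler_sum => y _; have /andP[k0 k1] := kw y.
  apply: le_trans (ler_wpM2l (B0 _ _ _ uS) k1) _.
  apply: ler_wpM2r; [exact: le_trans k0 k1|exact: BN].
by rewrite sumr_const /Lc mulr_natl mulrnAl.
Qed.

Lemma Fop_mono k1 k2 x (u : R) : 0 <= u <= S -> (forall y, k1 u y <= k2 u y) ->
  Fop k1 x u <= Fop k2 x u.
Proof. by move=> uS k12; apply: ler_sum => y _; apply: ler_wpM2l; [exact: B0|exact: k12]. Qed.

Lemma kit_bounds n : forall (t : R) x, 0 <= t <= S -> c x <= kit n t x <= W t.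
Proof.
elim: n => [|n IH] t x tS.
  by rewrite /= lexx /=; apply: le_trans (Cc_ge x) (W_ge _ _); case/andP: tS.
have k0 u y : 0 <= u <= S -> 0 <= kit n u y.
  by move=> uS; have /andP[h _] := IH u y uS; exact: le_trans (c0 y) h.
apply/andP; split.
- rewrite -subr_ge0.
  apply: (deriv_sign (fun u => kit n.+1 u x - c x) (fun u => - Fop (kit n) x u) 0 S _ _ _ _ t tS).
  + by apply: wcB; [exact: kit_cont|exact: wcC].
  + move=> u uS; apply: (is_derive_ext (is_deriveB' (kit_der n x u uS) (is_derive_cst' (c x) u))) => //.
    by rewrite subr0.
  + move=> u /andP[u0 uS]; rewrite oppr_le0; apply: Fop_ge0.
      by apply/andP; split; apply: ltW.
    by move=> y; apply: k0; apply/andP; split; apply: ltW.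
  + by rewrite kitS_S subrr.
- rewrite -subr_ge0.
  apply: (deriv_sign (fun u => W u - kit n.+1 u x) (fun u => - Lc * W u + Fop (kit n) x u) 0 S _ _ _ _ t tS).
  + by apply: wcB; [exact: W_cont|exact: kit_cont].
  + move=> u uS; apply: (is_derive_ext (is_deriveB' (W_der u) (kit_der n x u uS))) => //.
    by rewrite opprK.
  + move=> u /andP[u0 uS].
    have uS' : 0 <= u <= S by apply/andP; split; apply: ltW.
    rewrite mulNr addrC subr_le0.
    apply: Fop_le => // y; apply/andP; split; first exact: k0.
    by have /andP[_ ->] := IH u y uS'.
  + rewrite kitS_S subr_ge0; apply: le_trans (Cc_ge x) (W_ge _ _).
    exact: lexx.
Qed.

Lemma kit_ge0 n (t : R) x : 0 <= t <= S -> 0 <= kit n t x.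
Proof. by move=> tS; have /andP[h _] := kit_bounds n t x tS; exact: le_trans (c0 x) h. Qed.

Lemma kit_mono n : forall (t : R) x, 0 <= t <= S -> kit n t x <= kit n.+1 t x.
Proof.
elim: n => [|n IH] t x tS.
  by have /andP[h _] := kit_bounds 1 t x tS.
rewrite -subr_ge0.
apply: (deriv_sign (fun u => kit n.+2 u x - kit n.+1 u x)
   (fun u => - Fop (kit n.+1) x u + Fop (kit n) x u) 0 S _ _ _ _ t tS).
- by apply: wcB; exact: kit_cont.
- move=> u uS; apply: (is_derive_ext (is_deriveB' (kit_der n.+1 x u uS) (kit_der n x u uS))) => //.
  by rewrite opprK.
- move=> u /andP[u0 uS].
  have uS' : 0 <= u <= S by apply/andP; split; apply: ltW.
  rewrite addrC subr_le0; apply: Fop_mono => // y.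
  exact: IH.
- by rewrite !kitS_S subrr.
Qed.

Lemma intg_any (t : R) f : {within `[0, t], continuous f} ->
  mu.-integrable `[0, t] (EFin \o f).
Proof. by move=> cf; apply: continuous_compact_integrable => //; exact: segment_compact. Qed.

Definition kinf (t : R) (x : X) : R := limn (fun n => kit n t x).

Lemma kit_cvg (t : R) x : 0 <= t <= S -> (fun n => kit n t x) @ \oo --> kinf t x.
Proof.
move=> tS; apply: nondecreasing_is_cvgn.
  by apply/nondecreasing_seqP => n; exact: kit_mono.
exists (W t) => _ [n _ <-].
by have /andP[_ ->] := kit_bounds n t x tS.
Qed.

Lemma kinf_ge (t : R) x n : 0 <= t <= S -> kit n t x <= kinf t x.
Proof.
move=> tS; apply: (nondecreasing_cvgn_le (u_ := fun n => kit n t x)).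
  by apply/nondecreasing_seqP => m; exact: kit_mono.
exact: kit_cvg.
Qed.

Lemma kinf_le (t : R) x : 0 <= t <= S -> kinf t x <= W t.
Proof.
move=> tS; apply: limr_le; first exact: kit_cvg.
by apply: nearW => n; have /andP[_ ->] := kit_bounds n t x tS.
Qed.

Lemma kinf_gec (t : R) x : 0 <= t <= S -> c x <= kinf t x.
Proof. by move=> tS; exact: kinf_ge 0%N tS. Qed.

Lemma cvg_fsum (I : finType) (P : pred I) (u : I -> nat -> R) (l : I -> R) :
  (forall i, P i -> u i n @[n --> \oo] --> l i) ->
  (\sum_(i | P i) u i n) @[n --> \oo] --> \sum_(i | P i) l i.
Proof.
move=> hu.
have -> : (fun n => \sum_(i | P i) u i n) = (\sum_(i | P i) u i).
  by apply/funext => n; rewrite fct_sumE.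
elim/big_rec2: _ => [|i y G Pi hG]; first exact: cvg_cst.
exact: cvgD (hu _ Pi) hG.
Qed.

Lemma Fop_cvg x (u : R) : 0 <= u <= S ->
  Fop (kit n) x u @[n --> \oo] --> Fop kinf x u.
Proof.
move=> uS; rewrite /Fop; apply: cvg_fsum => y _.
apply: cvgMl_tmp; exact: kit_cvg.
Qed.

Lemma mS : measurable (`[0, S] : set R).
Proof. exact: measurable_itv. Qed.

Lemma Fop_meas n x : measurable_fun `[0, S] (Fop (kit n) x).
Proof.
apply: subspace_continuous_measurable_fun; first exact: mS.
by apply: Fop_cont => y; exact: kit_cont.
Qed.

Lemma Fopinf_meas x : measurable_fun `[0, S] (Fop kinf x).
Proof.
apply: (measurable_fun_cvg (h := fun n => Fop (kit n) x)).
  by move=> n; exact: Fop_meas.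
by move=> u; rewrite /= in_itv /= => uS; exact: Fop_cvg.
Qed.

Lemma W_le0 (u : R) : 0 <= u -> W u <= W 0.
Proof.
move=> u0; rewrite /W ler_wpM2l //; first by rewrite /Cc sumr_ge0.
rewrite ler_expR ler_wpM2l //; first exact: Lc0.
by rewrite lerD2l lerN2.
Qed.

Lemma Ri_cvg (t : R) x : 0 <= t <= S ->
  Ri t (Fop (kit n) x) @[n --> \oo] --> Ri t (Fop kinf x) /\
  mu.-integrable `[0, t] (EFin \o Fop kinf x).
Proof.
move=> /andP[t0 tS].
have sub : `[0, t] `<=` `[0, S] by apply: itv_sub.
have mD : measurable (`[0, t] : set (measurableTypeR R)) by exact: measurable_itv.
have inS (u : R) : u \in `[0, t] -> 0 <= u <= S.
  by rewrite in_itv /= => /andP[u0 ut]; rewrite u0 (le_trans ut tS).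
have mfn n : measurable_fun (T := measurableTypeR R) `[0, t] (EFin \o Fop (kit n) x).
  apply/measurable_EFinP; have := measurable_funS mS sub (Fop_meas n x); exact.
have mf : measurable_fun (T := measurableTypeR R) `[0, t] (EFin \o Fop kinf x).
  apply/measurable_EFinP; have := measurable_funS mS sub (Fopinf_meas x); exact.
have ig : mu.-integrable `[0, t] (EFin \o cst (Lc * W 0)).
  by apply: intg_any; exact: wcC.
have DC := dominated_convergence mD mfn mf _ ig _.
have h1 : \forall u \ae mu, u \in `[0, t] ->
    (EFin \o Fop (kit n) x) u @[n --> \oo] --> (EFin \o Fop kinf x) u.
  apply: aeW => u Du /=; apply/fine_cvgP; split; first by apply: nearW.
  exact: Fop_cvg x u (inS u Du).
have h2 : \forall u \ae mu, forall n, u \in `[0, t] ->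
    (`|(EFin \o Fop (kit n) x) u| <= (EFin \o cst (Lc * W 0)%R) u)%E.
  apply: aeW => u n Du /=; have uS := inS u Du.
  rewrite lee_fin ger0_norm; last by apply: Fop_ge0 => // y; exact: kit_ge0.
  apply: le_trans (Fop_le (kit n) x u (W u) uS _) _.
    by move=> y; rewrite kit_ge0 //=; have /andP[_ ->] := kit_bounds n u y uS.
  apply: ler_wpM2l; first exact: Lc0.
  by apply: W_le0; case/andP: uS.
have [ig' _ cv] := DC h1 h2.
split; last exact: ig'.
have fin : (\int[mu]_(u in `[0%R, t]) (EFin \o Fop kinf x) u)%E = (Ri t (Fop kinf x))%:E.
  by rewrite /Ri /Rintegral fineK //; exact: integrable_fin_num.
rewrite fin in cv; move/fine_cvgP: cv => [_ cv].
exact: cv.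
Qed.

Lemma SS : 0 <= S <= S.
Proof. by rewrite lexx ltW. Qed.

Lemma kinf_fix (t : R) x : 0 <= t <= S ->
  kinf t x = c x + (Ri S (Fop kinf x) - Ri t (Fop kinf x)).
Proof.
move=> tS.
have h1 : (fun n => kit n.+1 t x) @ \oo --> kinf t x.
  by have := kit_cvg t x tS; rewrite -cvg_shiftS.
have h2 : (fun n => kit n.+1 t x) @ \oo --> c x + (Ri S (Fop kinf x) - Ri t (Fop kinf x)).
  apply: cvgD; first exact: cvg_cst.
  by apply: cvgB; [exact: (Ri_cvg S x SS).1 | exact: (Ri_cvg t x tS).1].
by rewrite -(cvg_lim (@Rhausdorff R) h1) (cvg_lim (@Rhausdorff R) h2).
Qed.

Definition kfin (t : R) (x : X) : R := c x + (Ri S (Fop kinf x) - Ri t (Fop kinf x)).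

Lemma kfin_cont x : {within `[0, S], continuous (fun t => kfin t x)}.
Proof.
apply: wcD; first exact: wcC.
apply: wcB; first exact: wcC.
exact: Ri_cont S _ (ltW S0) (Ri_cvg S x SS).2.
Qed.

Lemma kfin_eq (t : R) x : 0 <= t <= S -> kfin t x = kinf t x.
Proof. by move=> tS; rewrite /kfin; have -> := kinf_fix t x tS. Qed.

Definition k2 (t : R) (x : X) : R := c x + (Ri S (Fop kfin x) - Ri t (Fop kfin x)).

Lemma Fop_eq k1 k3 x (u : R) : (forall y, k1 u y = k3 u y) -> Fop k1 x u = Fop k3 x u.
Proof. by move=> e; rewrite /Fop; apply: eq_bigr => y _; rewrite e. Qed.

Lemma Ri_eq (t : R) x : 0 <= t <= S -> Ri t (Fop kfin x) = Ri t (Fop kinf x).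
Proof.
move=> /andP[t0 tS]; rewrite /Ri; apply: eq_Rintegral => u.
rewrite inE /= in_itv /= => /andP[u0 ut].
by apply: Fop_eq => y; apply: kfin_eq; rewrite u0 (le_trans ut tS).
Qed.

Lemma k2_eq (t : R) x : 0 <= t <= S -> k2 t x = kinf t x.
Proof. by move=> tS; rewrite /k2 (Ri_eq S x SS) (Ri_eq t x tS); have -> := kinf_fix t x tS. Qed.

Lemma k2_cont x : {within `[0, S], continuous (fun t => k2 t x)}.
Proof.
apply: wcD; first exact: wcC.
apply: intop_cont => //; apply: Fop_cont => y; exact: kfin_cont.
Qed.

Lemma k2_der x (t : R) : 0 < t < S -> is_derive t 1 (fun u => k2 u x) (- Fop k2 x t).
Proof.
move=> tS.
have tS' : 0 <= t <= S by case/andP: tS => a b; rewrite ltW // ltW.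
have cF : {within `[0, S], continuous Fop kfin x}.
  by apply: Fop_cont => y; exact: kfin_cont.
apply: (is_derive_ext (is_deriveD' (is_derive_cst' (c x) t) (intop_der _ _ _ tS cF))) => //.
rewrite add0r; congr (- _); apply: Fop_eq => y.
by rewrite kfin_eq // k2_eq.
Qed.

Lemma k2_S x : k2 S x = c x.
Proof. by rewrite /k2 subrr addr0. Qed.

Lemma k2_ge (t : R) x : 0 <= t <= S -> c x <= k2 t x.
Proof. by move=> tS; rewrite k2_eq //; exact: kinf_gec. Qed.

Lemma ode_exists :
  exists k : R -> X -> R,
    [/\ (forall x, {within `[0, S], continuous (fun t => k t x)}),
        (forall x t, 0 < t < S -> is_derive t 1 (fun u => k u x) (- Fop k x t)),
        (forall x, k S x = c x) &
        (forall t x, 0 <= t <= S -> c x <= k t x)].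
Proof.
exists k2; split.
- exact: k2_cont.
- by move=> x t; exact: k2_der.
- exact: k2_S.
- by move=> t x; exact: k2_ge.
Qed.

End Ex.



Section Gen.
Context {R : realType} {X : finType}.

Definition backward (S : R) (A : R -> X -> X -> R) (h : R -> X -> R) :=
  (forall x, {within `[0, S], continuous (fun t => h t x)}) /\
  (forall x t, 0 < t < S -> is_derive t 1 (fun u => h u x)
     (- \sum_(y | y != x) A t x y * (h t y - h t x))).

Lemma gen_restrict (T s : R) (Q : R -> X -> X -> R) : s <= T ->
  is_generator T Q -> is_generator s Q.
Proof.
move=> sT [Q0 Qd Qc]; split.
- move=> t x y xy /andP[t0 ts]; apply: Q0 => //; by rewrite t0 (le_trans ts sT).
- move=> t x /andP[t0 ts]; apply: Qd; by rewrite t0 (le_trans ts sT).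
- move=> x y; apply: continuous_subspaceW (Qc x y); exact: itv_sub.
Qed.

Lemma gen_bound (S : R) (A : R -> X -> X -> R) : 0 <= S ->
  (forall x y, {within `[0, S], continuous (fun t => A t x y)}) ->
  exists M, 0 <= M /\ forall t x y, 0 <= t <= S -> `|A t x y| <= M.
Proof.
move=> S0 Ac.
have : forall p : X * X, exists tp : R, tp \in `[0, S] /\
    forall t, t \in `[0, S] -> `|A t p.1 p.2| <= `|A tp p.1 p.2|.
  move=> [x y].
  have cn : {within `[0, S], continuous (fun t => `|A t x y|)}.
    apply: wc_comp; first exact: Ac.
    by move=> t _; exact: norm_continuous.
  have [tp tpS tpmax] := EVT_max S0 cn.
  by exists tp; split.
move=> /fin_all_exists[tp htp].
exists (\sum_(p : X * X) `|A (tp p) p.1 p.2|); split.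
  by apply: sumr_ge0 => p _.
move=> t x y tS.
have := (htp (x, y)).2 t; rewrite in_itv /= tS => /(_ isT) /= h.
apply: le_trans h _.
by rewrite (bigD1 (x, y)) //= lerDl; apply: sumr_ge0 => p _.
Qed.


Lemma backward_exists (S : R) (A : R -> X -> X -> R) (c : X -> R) :
  0 < S -> is_generator S A -> (forall x, 0 <= c x) ->
  exists h, [/\ backward S A h, (forall x, h S x = c x),
    (forall t x, 0 <= t <= S -> 0 <= h t x) &
    (forall t x, 0 <= t <= S -> 0 < c x -> 0 < h t x)].
Proof.
move=> S0 [A0 Ad Ac] c0.
have [M [M0 AM]] := gen_bound S A (ltW S0) Ac.
pose a t x := \sum_(z | z != x) A t x z.
pose K := #|X|%:R * M.
have K0 : 0 <= K by rewrite /K mulr_ge0.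
have aK t x : 0 <= t <= S -> 0 <= a t x <= K.
  move=> tS; apply/andP; split.
    by apply: sumr_ge0 => z zx; apply: A0 => //; rewrite eq_sym.
  apply: (@le_trans _ _ (\sum_(z | z != x) M)).
    by apply: ler_sum => z _; apply: le_trans (ler_norm _) (AM _ _ _ tS).
  apply: (@le_trans _ _ (\sum_(z : X) M)).
    by rewrite [leRHS](bigD1 x) //= lerDr.
  by rewrite sumr_const /K mulr_natl.
pose B t x y := if x == y then K - a t x else A t x y.
pose N := K + M.
have N0 : 0 <= N by rewrite /N addr_ge0.
have Bc x y : {within `[0, S], continuous (fun t => B t x y)}.
  rewrite /B; case: (x == y); last exact: Ac.
  apply: wcB; first exact: wcC.
  by apply: wc_sum => z; exact: Ac.
have B0 t x y : 0 <= t <= S -> 0 <= B t x y.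
  move=> tS; rewrite /B; case: eqP => [_|/eqP xy].
    by rewrite subr_ge0; case/andP: (aK t x tS).
  exact: A0.
have BN t x y : 0 <= t <= S -> B t x y <= N.
  move=> tS; rewrite /B /N; case: eqP => [_|_].
    apply: (@le_trans _ _ K); last by rewrite lerDl.
    by rewrite lerBlDr lerDl; case/andP: (aK t x tS).
  apply: le_trans (ler_norm _) _; apply: le_trans (AM _ _ _ tS) _.
  by rewrite lerDr.
have [k [kc kd kS kge]] := ode_exists S N B c S0 N0 Bc B0 BN c0.
pose E t := expR (- (K * (S - t))).
have Ec : {within `[0, S], continuous E}.
  apply: (wc_comp _ (fun t => - (K * (S - t)))).
    apply: wcN; apply: wcM; first exact: wcC.
    by apply: wcB; [exact: wcC|exact: wcId].
  by move=> t _; exact: continuous_expR.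
have Ed (t : R) : is_derive t 1 E (E t * K).
  have h1 : is_derive t 1 (fun u => - (K * (S - u))) K.
    apply: (is_derive_ext (is_deriveN (is_deriveM' (is_derive_cst' K t)
       (is_deriveB' (is_derive_cst' S t) (is_derive_id' t))))).
      by apply/funext.
    by ring.
  exact: is_derive_comp1 h1 (is_derive_expR _).
exists (fun t x => E t * k t x); split.
- split.
    by move=> x; apply: wcM; [exact: Ec|exact: kc].
  move=> x t tS.
  apply: (is_derive_ext (is_deriveM' (Ed t) (kd x t tS))) => //.
  have F1 : Fop B k x t = (K - a t x) * k t x + \sum_(y | y != x) A t x y * k t y.
    rewrite /Fop (bigD1 x) //= /B eqxx; congr (_ + _).
    by apply: eq_bigr => y yx; rewrite eq_sym (negbTE yx).
  have F2 : \sum_(y | y != x) A t x y * (E t * k t y - E t * k t x) =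
      E t * \sum_(y | y != x) A t x y * k t y - E t * k t x * a t x.
    rewrite /a !mulr_sumr -sumrB; apply: eq_bigr => y _; ring.
  rewrite F1 F2; ring.
- by move=> x; rewrite /E subrr mulr0 oppr0 expR0 mul1r kS.
- by move=> t x tS; apply: mulr_ge0; [exact: expR_ge0|exact: le_trans (c0 x) (kge t x tS)].
- by move=> t x tS cx; apply: mulr_gt0; [exact: expR_gt0|exact: lt_le_trans cx (kge t x tS)].
Qed.

Lemma swap_sum (F : X -> X -> R) :
  \sum_x \sum_(y | y != x) F x y = \sum_y \sum_(x | x != y) F x y.
Proof.
rewrite (exchange_big_dep xpredT) //=; apply: eq_bigr => y _.
by apply: eq_bigl => x; rewrite eq_sym.
Qed.

Lemma dual (T s : R) (Q : R -> X -> X -> R) (x0 : X) (p h : R -> X -> R) :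
  0 < s <= T -> kolmogorov_forward T Q x0 p -> backward s Q h ->
  \sum_x p s x * h s x = h 0 x0.
Proof.
move=> /andP[s0 sT] [p0 pc pd] [hc hd].
pose G t := \sum_x p t x * h t x.
have Gc : {within `[0, s], continuous G}.
  apply: wc_sum => x; apply: wcM; last exact: hc.
  by apply: continuous_subspaceW (pc x); exact: itv_sub.
have Gd : forall t, t \in `]0, s[ -> is_derive t 1 G 0.
  move=> t; rewrite in_itv /= => /andP[t0 ts].
  have tT : 0 < t < T by rewrite t0 (lt_le_trans ts sT).
  have ts' : 0 < t < s by rewrite t0 ts.
  apply: (is_derive_ext (is_derive_fsum (fun x _ => is_deriveM' (pd x t tT) (hd x t ts')))) => //.
  have e x : (\sum_(y | y != x) Q t y x * p t y - \sum_(y | y != x) Q t x y * p t x) * h t x +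
      p t x * - (\sum_(y | y != x) Q t x y * (h t y - h t x)) =
      \sum_(y | y != x) (Q t y x * p t y * h t x - Q t x y * p t x * h t y).
    rewrite mulrBl !mulr_suml -sumrB mulrN mulr_sumr -sumrN -big_split /=.
    by apply: eq_bigr => y _; ring.
  under eq_bigr do rewrite e.
  under eq_bigr do rewrite sumrB.
  rewrite sumrB (swap_sum (fun x y => Q t y x * p t y * h t x)) /=.
  by rewrite subrr.
have [c _ e] := MVT s0 Gd Gc.
change (G s = h 0 x0).
move: e; rewrite mul0r => /eqP; rewrite subr_eq0 => /eqP ->.
rewrite /G (bigD1 x0) //= p0 eqxx mul1r big1 ?addr0 // => x xx0.
by rewrite p0 (negbTE xx0) mul0r.
Qed.

End Gen.


Section Cons.
Context {R : realType} {X : finType}.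

Lemma sum_dirac (x0 : X) (f : X -> R) : \sum_x (x == x0)%:R * f x = f x0.
Proof.
rewrite (bigD1 x0) //= eqxx mul1r big1 ?addr0 // => x xx0.
by rewrite (negbTE xx0) mul0r.
Qed.

Lemma mass (T s : R) (Q : R -> X -> X -> R) (x0 : X) (p : R -> X -> R) :
  kolmogorov_forward T Q x0 p -> 0 <= s <= T -> \sum_x p s x = 1.
Proof.
move=> kf /andP[s0 sT].
have [kf0 _ _] := kf.
have [<-|s0'] := eqVneq 0 s.
  under eq_bigr do rewrite kf0 -[_%:R]mulr1.
  exact: (sum_dirac x0 (fun _ => 1)).
have s0s : 0 < s <= T by rewrite lt_def eq_sym s0' s0 sT.
have bw : backward s Q (fun _ _ => 1).
  split; first by move=> x; exact: wcC.
  move=> x t _; apply: (is_derive_ext (is_derive_cst' 1 t)) => //.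
  by rewrite big1 ?oppr0 // => y _; rewrite subrr mulr0.
have := dual T s Q x0 p (fun _ _ => 1) s0s kf bw.
by under eq_bigr do rewrite mulr1.
Qed.

Lemma posit (T : R) (Q : R -> X -> X -> R) (x0 : X) (p : R -> X -> R) :
  is_generator T Q -> kolmogorov_forward T Q x0 p ->
  forall s x, 0 <= s <= T -> 0 <= p s x.
Proof.
move=> gQ kf s x /andP[s0 sT].
have [kf0 _ _] := kf.
have [<-|s0'] := eqVneq 0 s; first by rewrite kf0 ler0n.
have s0s : 0 < s <= T by rewrite lt_def eq_sym s0' s0 sT.
have s0'' : 0 < s by case/andP: s0s.
have [h [bw hS h0 _]] := backward_exists s Q (fun y => (y == x)%:R) s0''
   (gen_restrict T s Q sT gQ) (fun y => ler0n _ _).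
have := dual T s Q x0 p h s0s kf bw.
under eq_bigr do rewrite hS.
rewrite (bigD1 x) //= eqxx mulr1 big1 ?addr0.
  by move=> ->; apply: h0; rewrite lexx ltW.
by move=> y yx; rewrite (negbTE yx) mulr0.
Qed.

Local Open Scope ereal_scope.

Lemma ln_le_sub1 (z : R) : (0 < z)%R -> (ln z <= z - 1)%R.
Proof.
move=> z0; have e : (1 + (z - 1) = z)%R by ring.
have := @le_ln1Dx R (z - 1); rewrite e; apply; lra.
Qed.

Lemma fenchel (a b u : R) : (0 <= a)%R -> (0 <= b)%R -> (0 < u)%R ->
  (a * ln u - b * (u - 1))%:E <= kl_rate a b.
Proof.
move=> a0 b0 u0; rewrite /kl_rate.
have [->|a0'] := eqVneq a 0%R.
  rewrite lee_fin mul0r sub0r mulrBr mulr1 opprB lerBlDr lerDl.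
  exact: mulr_ge0 b0 (ltW u0).
have [->|b0'] := eqVneq b 0%R; first exact: leey.
have ap : (0 < a)%R by rewrite lt_def a0' a0.
have bp : (0 < b)%R by rewrite lt_def b0' b0.
rewrite lee_fin.
have z0 : (0 < u * b / a)%R by rewrite divr_gt0 // mulr_gt0.
have := ln_le_sub1 _ z0.
have e1 : ln (u * b / a) = (ln u + ln b - ln a)%R.
  rewrite lnM ?posrE ?mulr_gt0 ?invr_gt0 // lnM ?posrE // lnV ?posrE //.
have e2 : ln (a / b) = (ln a - ln b)%R.
  by rewrite lnM ?posrE ?invr_gt0 // lnV ?posrE.
rewrite e1 e2 => h.
have h2 := ler_wpM2l a0 h.
have e3 : (a * (u * b / a - 1) = u * b - a)%R.
  by field; rewrite gt_eqF.
rewrite e3 in h2; lra.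
Qed.

Lemma fenchel_eq (a b u : R) : (0 <= b)%R -> (0 < u)%R -> a = (b * u)%R ->
  (a * ln u - b * (u - 1))%:E = kl_rate a b.
Proof.
move=> b0 u0 ->; rewrite /kl_rate.
have [b00|b0'] := eqVneq b 0%R.
  by rewrite b00 !mul0r eqxx subrr.
have bp : (0 < b)%R by rewrite lt_def b0' b0.
rewrite mulf_eq0 (negbTE b0') gt_eqF //=.
congr EFin.
have -> : (b * u / b = u)%R by field; rewrite gt_eqF.
ring.
Qed.

Lemma kl_ge0 (a b : R) : (0 <= a)%R -> (0 <= b)%R -> 0 <= kl_rate a b.
Proof.
move=> a0 b0; apply: le_trans (fenchel a b 1 a0 b0 ltr01).
by rewrite ln1 mulr0 subrr mulr0 subrr.
Qed.

End Cons.


Section Ver.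
Context {R : realType} {X : finType}.
Notation mu := (@lebesgue_measure R).

Lemma ge0_le_integral_nm (D : set R) (f1 f2 : R -> \bar R) :
  (forall x, D x -> 0 <= f1 x)%E -> (forall x, D x -> f1 x <= f2 x)%E ->
  (\int[mu]_(x in D) f1 x <= \int[mu]_(x in D) f2 x)%E.
Proof.
move=> f10 f12.
have f20 x : D x -> (0 <= f2 x)%E by move=> Dx; exact: le_trans (f10 _ Dx) (f12 _ Dx).
rewrite (ge0_integralE mu f10) (ge0_integralE mu f20) /=.
apply: ereal_sup_le => _ [h /= hf1 <-]; exists h => //= x.
apply: le_trans (hf1 x) _.
rewrite /patch; case: ifPn => [|_]; [rewrite inE; exact: f12|by []].
Qed.

Variables (T : R) (Qpre Q : R -> X -> X -> R) (x0 : X) (p h : R -> X -> R).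
Hypotheses (T0 : 0 < T) (gpre : is_generator T Qpre) (gQ : is_generator T Q)
  (kf : kolmogorov_forward T Q x0 p) (bw : backward T Qpre h)
  (hpos : forall t x, 0 <= t <= T -> 0 < h t x).

Definition F0 (t : R) := \sum_x p t x * ln (h t x).
Definition D0 (t : R) := \sum_x p t x * \sum_(y | y != x)
  (Q t x y * (ln (h t y) - ln (h t x)) - Qpre t x y * (h t y / h t x - 1)).

Lemma inT (t : R) : [set` `[0, T]] t -> 0 <= t <= T.
Proof. by rewrite /= in_itv. Qed.

Lemma hc x : {within `[0, T], continuous (fun t => h t x)}.
Proof. by case: bw => c _; exact: c. Qed.

Lemma pc x : {within `[0, T], continuous (fun t => p t x)}.
Proof. by case: kf => _ c _; exact: c. Qed.

Lemma Qc x y : {within `[0, T], continuous (fun t => Q t x y)}.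
Proof. by case: gQ => _ _ c; exact: c. Qed.

Lemma Qprec x y : {within `[0, T], continuous (fun t => Qpre t x y)}.
Proof. by case: gpre => _ _ c; exact: c. Qed.

Lemma lnh_cont x : {within `[0, T], continuous (fun t => ln (h t x))}.
Proof.
apply: wc_comp; first exact: hc.
by move=> t /inT tT; apply: continuous_ln; exact: hpos.
Qed.

Lemma hinv_cont x : {within `[0, T], continuous (fun t => (h t x)^-1)}.
Proof.
apply: wcV; last exact: hc.
by move=> t /inT tT; rewrite gt_eqF // hpos.
Qed.

Lemma F0_cont : {within `[0, T], continuous F0}.
Proof. by apply: wc_sum => x; apply: wcM; [exact: pc|exact: lnh_cont]. Qed.

Lemma D0_cont : {within `[0, T], continuous D0}.
Proof.
apply: wc_sum => x; apply: wcM; first exact: pc.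
apply: wc_sum => y; apply: wcB; apply: wcM.
- exact: Qc.
- by apply: wcB; exact: lnh_cont.
- exact: Qprec.
- apply: wcB; last exact: wcC.
  by apply: wcM; [exact: hc|exact: hinv_cont].
Qed.


Lemma F0_der (t : R) : 0 < t < T -> is_derive t 1 F0 (D0 t).
Proof.
move=> tT.
have tT' : 0 <= t <= T by case/andP: tT => a b; rewrite ltW // ltW.
have [_ _ pd] := kf.
have [_ hd] := bw.
have hx x : 0 < h t x := hpos t x tT'.
have Dx x : is_derive t 1 (fun u => p u x * ln (h u x))
    ((\sum_(y | y != x) Q t y x * p t y - \sum_(y | y != x) Q t x y * p t x) * ln (h t x) +
    p t x * ((h t x)^-1 * - (\sum_(y | y != x) Qpre t x y * (h t y - h t x)))).
  have A1 := pd x t tT.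
  have A2 := is_derive_comp1 (hd x t tT) (@is_derive1_ln R (h t x) (hx x)).
  have A3 := is_deriveM' A1 A2.
  exact: A3.
have DD := is_derive_fsum (P := xpredT) (fun x _ => Dx x).
apply: (is_derive_ext DD) => //.
have e1 x : (\sum_(y | y != x) Q t y x * p t y - \sum_(y | y != x) Q t x y * p t x) * ln (h t x) +
    p t x * ((h t x)^-1 * - (\sum_(y | y != x) Qpre t x y * (h t y - h t x))) =
    \sum_(y | y != x) (Q t y x * p t y * ln (h t x)) +
    \sum_(y | y != x) (- (Q t x y * p t x * ln (h t x)) - p t x * (Qpre t x y * (h t y / h t x - 1))).
  rewrite -big_split /= mulrBl !mulr_suml -sumrB mulrN mulrN !mulr_sumr -sumrN -big_split /=.
  by apply: eq_bigr => y _; field; rewrite gt_eqF.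
have e2 x : p t x * \sum_(y | y != x)
    (Q t x y * (ln (h t y) - ln (h t x)) - Qpre t x y * (h t y / h t x - 1)) =
    \sum_(y | y != x) (Q t x y * p t x * ln (h t y)) +
    \sum_(y | y != x) (- (Q t x y * p t x * ln (h t x)) - p t x * (Qpre t x y * (h t y / h t x - 1))).
  by rewrite -big_split /= mulr_sumr; apply: eq_bigr => y _; ring.
under eq_bigr do rewrite e1.
rewrite /D0; under [RHS]eq_bigr do rewrite e2.
by rewrite !big_split /= (swap_sum (fun x y => Q t y x * p t y * ln (h t x))).
Qed.


Lemma ftc : (\int[mu]_(t in `[0%R, T]) (D0 t)%:E = (F0 T - F0 0)%:E)%E.
Proof.
rewrite EFinB; apply: continuous_FTC2 T0 D0_cont _ _.
  have [_ l0 lT] := (continuous_within_itvP F0 T0).1 F0_cont.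
  split => //; move=> t; rewrite in_itv /= => tT.
  exact: (@ex_derive _ _ _ _ _ _ _ (F0_der t tT)).
move=> t; rewrite in_itv /= => tT.
by rewrite derive1E (@derive_val _ _ _ _ _ _ _ (F0_der t tT)).
Qed.

Lemma p_ge0 (t : R) x : 0 <= t <= T -> 0 <= p t x.
Proof. by move=> tT; exact: posit T Q x0 p gQ kf t x tT. Qed.

Lemma term_le (t : R) x y : 0 <= t <= T -> y != x ->
  ((Q t x y * (ln (h t y) - ln (h t x)) - Qpre t x y * (h t y / h t x - 1))%:E
    <= kl_rate (Q t x y) (Qpre t x y))%E.
Proof.
move=> tT yx.
have [Q0 _ _] := gQ; have [P0 _ _] := gpre.
have xy : x != y by rewrite eq_sym.
have hy := hpos t y tT; have hx := hpos t x tT.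
have -> : ln (h t y) - ln (h t x) = ln (h t y / h t x).
  by rewrite lnM ?posrE ?invr_gt0 // lnV ?posrE.
apply: fenchel; [exact: Q0|exact: P0|by rewrite divr_gt0].
Qed.

Lemma cost_ge0 (t : R) : 0 <= t <= T -> (0 <= running_cost Qpre Q p t)%E.
Proof.
move=> tT; have [Q0 _ _] := gQ; have [P0 _ _] := gpre.
apply: sume_ge0 => x _; apply: mule_ge0; first by rewrite lee_fin p_ge0.
apply: sume_ge0 => y yx; apply: kl_ge0; [apply: Q0|apply: P0] => //; by rewrite eq_sym.
Qed.

Lemma D0_le (t : R) : 0 <= t <= T -> ((D0 t)%:E <= running_cost Qpre Q p t)%E.
Proof.
move=> tT; rewrite /D0 /running_cost -sumEFin.
apply: lee_sum => x _; rewrite EFinM; apply: lee_wpmul2l; first by rewrite lee_fin p_ge0.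
rewrite -sumEFin; apply: lee_sum => y yx; exact: term_le.
Qed.

Lemma ver : ((F0 T - F0 0)%:E <= \int[mu]_(t in `[0%R, T]) running_cost Qpre Q p t)%E.
Proof.
rewrite -ftc integralE.
apply: (@le_trans _ _ (\int[mu]_(t in `[0%R, T]) ((EFin \o D0)^\+ t))%E).
  rewrite -[leRHS]adde0; apply: leeD2l; rewrite oppe_le0.
  by apply: integral_ge0 => t _; exact: funeneg_ge0.
apply: ge0_le_integral_nm => t /inT tT; first exact: funepos_ge0.
rewrite funeposE ge_max; apply/andP; split; first exact: D0_le.
exact: cost_ge0.
Qed.

Lemma ver_eq : (forall t x y, 0 <= t <= T -> x != y ->
    Q t x y = Qpre t x y * h t y / h t x) ->
  (\int[mu]_(t in `[0%R, T]) running_cost Qpre Q p t = (F0 T - F0 0)%:E)%E.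
Proof.
move=> Qh; rewrite -ftc; apply: eq_integral => t /[1!inE] /inT tT.
rewrite /D0 /running_cost -sumEFin; apply: eq_bigr => x _.
rewrite EFinM -sumEFin; congr (_ * _)%E; apply: eq_bigr => y yx.
have [P0 _ _] := gpre.
have xy : x != y by rewrite eq_sym.
have hy := hpos t y tT; have hx := hpos t x tT.
have -> : ln (h t y) - ln (h t x) = ln (h t y / h t x).
  by rewrite lnM ?posrE ?invr_gt0 // lnV ?posrE.
symmetry; apply: fenchel_eq; [exact: P0|by rewrite divr_gt0|].
by rewrite Qh // mulrA.
Qed.

End Ver.


Section Main.
Context {R : realType} {X : finType}.
Notation mu := (@lebesgue_measure R).
Variables (T alpha : R) (r : X -> R) (Qpre : R -> X -> X -> R) (x0 : X)
  (Qstar : R -> X -> X -> R) (pstar ppre : R -> X -> R).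
Hypotheses (T0 : 0 < T) (a0 : 0 < alpha) (gpre : is_generator T Qpre)
  (gstar : is_generator T Qstar) (kfs : kolmogorov_forward T Qstar x0 pstar)
  (kfp : kolmogorov_forward T Qpre x0 ppre).

Definition J := (\int[mu]_(t in `[0%R, T]) running_cost Qpre Qstar pstar t)%E.
Definition Zp (psi : X -> R) := \sum_y ppre T y * expR (r y / alpha + psi y).

Lemma TT : 0 < T <= T.
Proof. by rewrite T0 lexx. Qed.

Lemma L_psi (psi : X -> R) :
  ((\sum_y pstar T y * (r y / alpha + psi y) - ln (Zp psi))%:E <= J)%E.
Proof.
have [h [bw hT _ hp]] := backward_exists T Qpre (fun y => expR (r y / alpha + psi y)) T0 gpre
  (fun y => expR_ge0 _).
have hpos t y : 0 <= t <= T -> 0 < h t y by move=> tT; apply: hp => //; exact: expR_gt0.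
have := ver T Qpre Qstar x0 pstar h T0 gpre gstar kfs bw hpos.
have e1 : F0 pstar h T = \sum_y pstar T y * (r y / alpha + psi y).
  by rewrite /F0; apply: eq_bigr => y _; rewrite hT expRK.
have e2 : F0 pstar h 0 = ln (h 0 x0).
  rewrite /F0; have [p0 _ _] := kfs; under eq_bigr do rewrite p0.
  exact: (sum_dirac x0 (fun y => ln (h 0 y))).
have e3 : h 0 x0 = Zp psi.
  rewrite -(dual T T Qpre x0 ppre h TT kfp bw) /Zp.
  by apply: eq_bigr => y _; rewrite hT.
by rewrite e1 e2 e3.
Qed.


Lemma comp_exists : exists (Q : R -> X -> X -> R) (p : R -> X -> R),
  [/\ is_generator T Q, kolmogorov_forward T Q x0 p &
      objective T alpha r Qpre Q p = (alpha * ln (Zp (fun _ => 0)))%:E].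
Proof.
have [h [bw hT _ hp]] := backward_exists T Qpre (fun y => expR (r y / alpha + 0)) T0 gpre
  (fun y => expR_ge0 _).
have hpos t y : 0 <= t <= T -> 0 < h t y by move=> tT; apply: hp => //; exact: expR_gt0.
have [hc hd] := bw.
have [P0 Pd Pc] := gpre.
have [p0 pc pd] := kfp.
pose Z := h 0 x0.
have Zp0 : 0 < Z by apply: hpos; apply/andP; split; [exact: lexx|exact: ltW].
have ZE : Z = Zp (fun _ => 0).
  rewrite /Z -(dual T T Qpre x0 ppre h TT kfp bw) /Zp.
  by apply: eq_bigr => y _; rewrite hT.
have hinv x : {within `[0, T], continuous (fun t => (h t x)^-1)}.
  apply: wcV; last exact: hc.
  by move=> t; rewrite /= in_itv => tT; rewrite gt_eqF // hpos.
pose Qh t x y := if x == y then - \sum_(z | z != x) Qpre t x z * h t z / h t x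
  else Qpre t x y * h t y / h t x.
pose ph t x := ppre t x * h t x / Z.
have gQ : is_generator T Qh.
  split.
  - move=> t x y xy tT; rewrite /Qh (negbTE xy).
    by apply: divr_ge0; [apply: mulr_ge0; [exact: P0|exact: ltW (hpos _ _ tT)]|exact: ltW (hpos _ _ tT)].
  - move=> t x tT; rewrite /Qh eqxx; congr (- _).
    by apply: eq_bigr => y yx; rewrite eq_sym (negbTE yx).
  - move=> x y; rewrite /Qh; case: (x == y).
      apply: wcN; apply: wc_sum => z.
      by apply: wcM; [apply: wcM; [exact: Pc|exact: hc]|exact: hinv].
    by apply: wcM; [apply: wcM; [exact: Pc|exact: hc]|exact: hinv].
have kfh : kolmogorov_forward T Qh x0 ph.
  split.
  - move=> x; rewrite /ph p0; case: eqP => [->|_].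
      by rewrite mul1r divff // gt_eqF.
    by rewrite !mul0r.
  - move=> x; apply: wcM; last exact: wcC.
    by apply: wcM; [exact: pc|exact: hc].
  - move=> x t tT.
    have tT' : 0 <= t <= T by case/andP: tT => a b; rewrite ltW // ltW.
    have hx := hpos t x tT'.
    apply: (is_derive_ext (is_deriveM' (is_deriveM' (pd x t tT) (hd x t tT)) (is_derive_cst' Z^-1 t))) => //.
    rewrite mulr0 addr0 mulrBl !mulr_suml -sumrB mulrN mulr_sumr -sumrN -big_split /= mulr_suml -sumrB.
    apply: eq_bigr => y yx.
    have xy : (x == y) = false by rewrite eq_sym (negbTE yx).
    have hy := hpos t y tT'.
    rewrite /Qh /ph (negbTE yx) xy.
    by field; rewrite !gt_eqF.
have Qhe t x y : 0 <= t <= T -> x != y -> Qh t x y = Qpre t x y * h t y / h t x.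
  by move=> _ xy; rewrite /Qh (negbTE xy).
have V := ver_eq T Qpre Qh x0 ph h T0 gpre gQ kfh bw hpos Qhe.
exists Qh, ph; split => //.
rewrite /objective V.
have e1 : F0 ph h T = \sum_y ph T y * (r y / alpha).
  by rewrite /F0; apply: eq_bigr => y _; rewrite hT addr0 expRK.
have e2 : F0 ph h 0 = ln Z.
  rewrite /F0; have [ph0 _ _] := kfh; under eq_bigr do rewrite ph0.
  exact: (sum_dirac x0 (fun y => ln (h 0 y))).
rewrite e1 e2 -EFinM -EFinB -ZE; congr EFin.
have e3 : alpha * \sum_y ph T y * (r y / alpha) = \sum_y ph T y * r y.
  by rewrite mulr_sumr; apply: eq_bigr => y _; field; rewrite gt_eqF.
rewrite mulrBr e3; ring.
Qed.


Hypothesis opt : forall (Q : R -> X -> X -> R) (p : R -> X -> R),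
  is_generator T Q -> kolmogorov_forward T Q x0 p ->
  (objective T alpha r Qpre Q p <= objective T alpha r Qpre Qstar pstar)%E.

Lemma key (psi : X -> R) :
  \sum_y pstar T y * psi y <= ln (Zp psi) - ln (Zp (fun _ => 0)).
Proof.
have [Qh [ph [gQ kfh Eo]]] := comp_exists.
have S1 := opt Qh ph gQ kfh.
have S2 := L_psi psi.
rewrite Eo /objective in S1; rewrite /J in S2.
move: S1 S2.
case: (\int[mu]_(t in `[0%R, T]) running_cost Qpre Qstar pstar t)%E => [j| |] S1 S2.
- rewrite -EFinM -EFinB lee_fin in S1; rewrite lee_fin in S2.
  have e : \sum_y pstar T y * (r y / alpha + psi y) =
      (\sum_y pstar T y * r y) / alpha + \sum_y pstar T y * psi y.
    rewrite mulr_suml -big_split /=; apply: eq_bigr => y _; ring.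
  rewrite e in S2.
  have h := ler_wpM2l (ltW a0) S2.
  have e4 : alpha * ((\sum_y pstar T y * r y) / alpha + \sum_y pstar T y * psi y - ln (Zp psi)) =
      \sum_y pstar T y * r y + alpha * \sum_y pstar T y * psi y - alpha * ln (Zp psi).
    by field; rewrite gt_eqF.
  rewrite e4 in h.
  rewrite -(ler_pM2l a0) mulrBr; lra.
- by rewrite muleC gt0_mulye ?lte_fin // leeNy_eq in S1.
- by rewrite leeNy_eq in S2.
Qed.


Lemma final x : pstar T x =
  expR (r x / alpha) * ppre T x / \sum_y expR (r y / alpha) * ppre T y.
Proof.
pose Z0 := Zp (fun _ => 0).
have Zden : \sum_y expR (r y / alpha) * ppre T y = Z0.
  by rewrite /Z0 /Zp; apply: eq_bigr => y _; rewrite addr0 mulrC.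
rewrite Zden.
have TT' : 0 <= T <= T by rewrite ltW // lexx.
have pp0 y : 0 <= ppre T y := posit T Qpre x0 ppre gpre kfp T y TT'.
have ps0 y : 0 <= pstar T y := posit T Qstar x0 pstar gstar kfs T y TT'.
have mp : \sum_y ppre T y = 1 := mass T T Qpre x0 ppre kfp TT'.
have ms : \sum_y pstar T y = 1 := mass T T Qstar x0 pstar kfs TT'.
have Z0ge : 0 <= Z0 by apply: sumr_ge0 => y _; apply: mulr_ge0 => //; exact: expR_ge0.
have Z0pos : 0 < Z0.
  rewrite lt_def Z0ge andbT; apply/eqP => Z00.
  have h0 y : ppre T y = 0.
    have := @psumr_eq0P _ _ xpredT (fun y => ppre T y * expR (r y / alpha + 0))
      (fun y _ => mulr_ge0 (pp0 y) (expR_ge0 _)) Z00 y isT.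
    by move/eqP; rewrite mulf_eq0 (gt_eqF (expR_gt0 _)) orbF => /eqP.
  by move: mp; rewrite big1 // => /esym/eqP; rewrite oner_eq0.
pose pi y := expR (r y / alpha) * ppre T y / Z0.
have pi0 y : 0 <= pi y.
  by rewrite /pi divr_ge0 // ?mulr_ge0 // ?expR_ge0 // ltW.
have spi : \sum_y pi y = 1.
  by rewrite /pi -mulr_suml Zden mulfV // gt_eqF.
have le y : pstar T y <= pi y.
  apply/ler_addgt0Pr => e e0.
  pose d := e / (pi y + 1).
  have pi1 : 0 < pi y + 1 by rewrite ltr_wpDl.
  have d0 : 0 < d by rewrite divr_gt0.
  pose l := 1 + d.
  have l0 : 0 < l by rewrite /l addr_gt0.
  pose psi z := if z == y then ln l else 0.
  have K := key psi.
  have LS : \sum_z pstar T z * psi z = pstar T y * ln l.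
    rewrite (bigD1 y) //= /psi eqxx big1 ?addr0 // => z zy.
    by rewrite (negbTE zy) mulr0.
  have ZS : Zp psi = Z0 + ppre T y * expR (r y / alpha) * d.
    rewrite /Z0 /Zp (bigD1 y) //= [X in _ = X + _](bigD1 y) //= /psi eqxx.
    rewrite (eq_bigr (fun i => ppre T i * expR (r i / alpha + 0))); last first.
      by move=> z zy; rewrite (negbTE zy).
    by rewrite expRD lnK ?posrE // addr0 /l; ring.
  have ZS2 : Zp psi = Z0 * (1 + pi y * d).
    by rewrite ZS /pi; field; rewrite gt_eqF.
  have q0 : 0 <= pi y * d by rewrite mulr_ge0 // ltW.
  have lnle : ln (Zp psi) - ln Z0 <= pi y * d.
    rewrite ZS2 lnM ?posrE //; last by rewrite ltr_wpDr.
    have -> : ln Z0 + ln (1 + pi y * d) - ln Z0 = ln (1 + pi y * d) by ring.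
    by apply: le_ln1Dx; apply: lt_le_trans q0; rewrite ltrN10.
  have lnl : d / (1 + d) <= ln l.
    have linv : 0 < l^-1 by rewrite invr_gt0.
    have := ln_le_sub1 _ linv.
    rewrite lnV ?posrE // => h.
    have -> : d / (1 + d) = 1 - l^-1 by rewrite /l; field; rewrite gt_eqF // addr_gt0.
    lra.
  rewrite LS in K.
  have h1 : pstar T y * (d / (1 + d)) <= pi y * d.
    apply: le_trans (le_trans _ K) lnle.
    by rewrite ler_wpM2l.
  have h2 : pstar T y * d <= pi y * d * (1 + d).
    have := ler_wpM2r (ltW l0) h1.
    have -> : pstar T y * (d / (1 + d)) * l = pstar T y * d.
      by rewrite /l; field; rewrite gt_eqF // addr_gt0.
    by [].
  have h3 : pstar T y <= pi y * (1 + d).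
    by rewrite -(ler_pM2r d0) mulrAC.
  have h4 : pi y * d <= e.
    rewrite /d mulrA ler_pdivrMr //; lra.
  lra.
have e0 : \sum_y (pi y - pstar T y) = 0 by rewrite sumrB spi ms subrr.
have ge y : 0 <= pi y - pstar T y by rewrite subr_ge0; exact: le.
have := @psumr_eq0P _ _ xpredT (fun y => pi y - pstar T y)
  (fun y _ => ge y) e0 x isT.
by move/eqP; rewrite subr_eq0 => /eqP <-.
Qed.

End Main.

Theorem theorem1 (R : realType) (X : finType) (T alpha : R) (r : X -> R)
    (Qpre : R -> X -> X -> R) (x0 : X)
    (Qstar : R -> X -> X -> R) (pstar : R -> X -> R) :
  0 < T -> 0 < alpha ->
  is_generator T Qpre ->
  is_generator T Qstar ->
  kolmogorov_forward T Qstar x0 pstar ->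
  (forall (Q : R -> X -> X -> R) (p : R -> X -> R),
      is_generator T Q -> kolmogorov_forward T Q x0 p ->
      (objective T alpha r Qpre Q p <= objective T alpha r Qpre Qstar pstar)%E) ->
  forall ppre : R -> X -> R, kolmogorov_forward T Qpre x0 ppre ->
  forall x : X,
    pstar T x = expR (r x / alpha) * ppre T x /
                \sum_(y : X) expR (r y / alpha) * ppre T y.
Proof.
move=> T0 a0 gpre gstar kfs opt ppre kfp x.
exact: (final T alpha r Qpre x0 Qstar pstar ppre T0 a0 gpre gstar kfs kfp opt x).
Qed.
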